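(* Let $w=w_1\cdots w_n\in S_n$ and view $w$ as the composition $(w_1,\ldots,w_n)$. Then the Newton polytope $\mathrm{Newton}(\kappa_w)$ of the key polynomial $\kappa_w(x)$ equals the Bruhat interval polytope $\mathsf{Q}_{w,w_0}$, where $w_0=n\,(n-1)\cdots 2\,1$ is the maximum of $S_n$ in the Bruhat order.
   Context: For a polynomial $f=\sum_\alpha c_\alpha x^\alpha\in\mathbb{R}[x_1,\ldots,x_n]$, $\mathrm{Newton}(f)$ is the convex hull of $\{\alpha\colon c_\alpha\neq0\}$. Let $\partial_i f=(f-s_if)/(x_i-x_{i+1})$, where $s_if$ swaps $x_i$ and $x_{i+1}$, and $\pi_i f=\partial_i(x_if)$. Key polynomials for a composition $\alpha$ of length $n$: if $\alpha$ is weakly decreasing, $\kappa_\alpha=x^\alpha$; otherwise choose $i$ with $\alpha_i<\alpha_{i+1}$, let $\alpha'$ be $\alpha$ with $\alpha_i,\alpha_{i+1}$ interchanged, and set $\kappa_\alpha=\pi_i\kappa_{\alpha'}$. For $u\le v$ in the Bruhat order on $S_n$, the Bruhat interval polytope $\mathsf{Q}_{u,v}$ is the convex hull in $\mathbb{R}^n$ of the vectors $(\sigma_1,\ldots,\sigma_n)$ for all $\sigma$ in the Bruhat interval $[u,v]$. *)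

(* Defs.v *)
From HB Require Import structures.
From mathcomp Require Import all_boot all_order all_algebra all_fingroup.
From mathcomp Require Import mpoly.
From Stdlib Require Import ClassicalEpsilon.
Set Implicit Arguments. Unset Strict Implicit. Unset Printing Implicit Defensive.
Import Order.TTheory GRing.Theory Num.Theory.
Local Open Scope ring_scope.

Section KeyNewton.
Variables (R : realFieldType) (n : nat).

(* successor index i+1 (only used when i.+1 < n; insubd is just a total cast) *)
Definition osucc (i : 'I_n) : 'I_n := insubd i i.+1.
Definition sti (i : 'I_n) : 'S_n := tperm i (osucc i).

(* divided difference: d_i f = (f - s_i f) / (x_i - x_{i+1}), the exact
   quotient in the polynomial ring (chosen classically; it exists and is
   unique since {mpoly R[n]} is an integral domain). *)
Definition ddiff (i : 'I_n) (f : {mpoly R[n]}) : {mpoly R[n]} :=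
  epsilon (inhabits 0)
    (fun g : {mpoly R[n]} =>
       ('X_i - 'X_(osucc i)) * g = f - msym (sti i) f).

Definition demazure (i : 'I_n) (f : {mpoly R[n]}) : {mpoly R[n]} :=
  ddiff i ('X_i * f).

Definition xpow (a : 'I_n -> nat) : {mpoly R[n]} :=
  'X_[ [multinom a i | i < n] ].

Fixpoint key_fuel (k : nat) (a : 'I_n -> nat) : {mpoly R[n]} :=
  match k with
  | 0 => xpow a
  | k'.+1 =>
    match [pick i : 'I_n | (i.+1 < n)%N && (a i < a (osucc i))%N] with
    | Some i => demazure i (key_fuel k' (fun p => a (sti i p)))
    | None => xpow a
    end
  end.

(* Each step removes exactly one pair p<q with a_p<a_q, so n^2 steps
   always suffice to reach a weakly decreasing composition. *)
Definition key (a : 'I_n -> nat) : {mpoly R[n]} := key_fuel (n ^ 2) a.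

Definition conv (S : seq 'rV[R]_n) (x : 'rV[R]_n) : Prop :=
  exists lam : 'I_(size S) -> R,
    (forall k, 0 <= lam k) /\ \sum_k lam k = 1 /\
    x = \sum_k lam k *: S`_k.

Definition mvec (m : 'X_{1..n}) : 'rV[R]_n := \row_i ((m i)%:R).

Definition Newton (f : {mpoly R[n]}) : 'rV[R]_n -> Prop :=
  conv [seq mvec m | m <- msupp f].

Definition pvec (s : 'S_n) : 'rV[R]_n := \row_i ((s i).+1%:R).

End KeyNewton.

Definition perm_comp (n : nat) (w : 'S_n) : 'I_n -> nat := fun i => (w i).+1.

(* Bruhat order: reflexive-transitive closure of u -> u t_{ij} where
   i < j are positions with u(i) < u(j) (i.e. length increases). *)
Definition bruhat_step (n : nat) : rel 'S_n :=
  fun u v => [exists i : 'I_n, exists j : 'I_n,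
               [&& (i < j)%N, (u i < u j)%N & v == (tperm i j * u)%g]].

Definition bruhat_le (n : nat) (u v : 'S_n) : bool := connect (@bruhat_step n) u v.

Definition w0 (n : nat) : 'S_n := perm (@rev_ord_inj n).

Definition bip (R : realFieldType) (n : nat) (u v : 'S_n) : 'rV[R]_n -> Prop :=
  conv [seq pvec R s | s <- enum 'S_n & bruhat_le u s && bruhat_le s v].

(* Main.v *)
Require Import Defs.
From HB Require Import structures.
From mathcomp Require Import all_boot all_order all_algebra all_fingroup.
From mathcomp Require Import mpoly.
From mathcomp Require Import zify ring lra.
From Stdlib Require Import ClassicalEpsilon FunctionalExtensionality.
Set Implicit Arguments. Unset Strict Implicit. Unset Printing Implicit Defensive.
Import Order.TTheory GRing.Theory Num.Theory.

Module PP1.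
Local Open Scope ring_scope.

Lemma sum_single (V : nmodType) (N k0 : nat) (F : nat -> V) :
  (forall k, (k < N)%N -> k <> k0 -> F k = 0) ->
  \sum_(k < N) F k = if (k0 < N)%N then F k0 else 0.
Proof.
elim: N => [|N IH] H; first by rewrite big_ord0.
rewrite big_ord_recr /= IH; last by move=> k hk; apply: H; lia.
have [h|h|h] := ltngtP k0 N.
- rewrite (H N) ?addr0 //; [|lia]. have -> : (k0 < N.+1)%N by lia. by [].
- rewrite (H N) ?addr0 //; [|lia]. have -> : (k0 < N.+1)%N = false by lia. by [].
- subst; rewrite ltnSn add0r; by [].
Qed.

Section Conv.
Variables (R : realFieldType) (n : nat).
Implicit Types (S T : seq 'rV[R]_n) (x p q : 'rV[R]_n).

Definition conv' S x : Prop :=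
  exists lam : nat -> R, (forall k, 0 <= lam k) /\
    \sum_(k < size S) lam k = 1 /\ x = \sum_(k < size S) lam k *: S`_k.

Lemma convE S x : conv S x <-> conv' S x.
Proof.
split.
- move=> [lam [h0 [h1 h2]]].
  exists (fun k => match insub k with Some o => lam o | None => 0 end).
  split; first by move=> k; case: insub.
  split.
  + rewrite -h1; apply: eq_bigr => k _; by rewrite valK.
  + rewrite h2; apply: eq_bigr => k _; by rewrite valK.
- move=> [lam [h0 [h1 h2]]]; exists (fun k => lam k); split => //.
Qed.

Lemma conv_mem S p : p \in S -> conv' S p.
Proof.
move=> pS; exists (fun k => (k == index p S)%:R); split.
  by move=> k; case: eqP.
have hi : (index p S < size S)%N by rewrite index_mem.
split.
- rewrite (@sum_single _ _ (index p S) (fun k => (k == index p S)%:R)); first by rewrite hi eqxx.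
  by move=> k _ /eqP/negbTE ->.
- rewrite (@sum_single _ _ (index p S) (fun k => (k == index p S)%:R *: S`_k)); first by rewrite hi eqxx scale1r nth_index.
  by move=> k _ /eqP/negbTE ->; rewrite scale0r.
Qed.

Lemma conv_trans S T x : conv' S x -> (forall p, p \in S -> conv' T p) -> conv' T x.
Proof.
move=> [lam [h0 [h1 h2]]] HS.
pose P k (mu : nat -> R) := (forall t, 0 <= mu t) /\ \sum_(t < size T) mu t = 1 /\
    S`_k = \sum_(t < size T) mu t *: T`_t.
have H : forall k, exists mu : nat -> R, (k < size S)%N -> P k mu.
  move=> k; case: (ltnP k (size S)) => hk.
  - have [mu hmu] := HS _ (mem_nth 0 hk). by exists mu.
  - by exists (fun _ => 0).
pose mu k := proj1_sig (constructive_indefinite_description _ (H k)).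
have hmu k : (k < size S)%N -> P k (mu k) := proj2_sig (constructive_indefinite_description _ (H k)).
exists (fun t => \sum_(k < size S) lam k * mu k t); split.
  move=> t; apply: sumr_ge0 => k _; apply: mulr_ge0 => //; by case: (hmu k (ltn_ord k)).
split.
- rewrite exchange_big /= -h1; apply: eq_bigr => k _.
  rewrite -mulr_sumr; case: (hmu k (ltn_ord k)) => _ [-> _]; by rewrite mulr1.
- rewrite h2 (eq_bigr (fun k : 'I_(size S) => \sum_(t < size T) (lam k * mu k t) *: T`_t)).
    rewrite exchange_big /=; apply: eq_bigr => t _; by rewrite scaler_suml.
  move=> k _; case: (hmu k (ltn_ord k)) => _ [_ ->].
  rewrite scaler_sumr; apply: eq_bigr => t _; by rewrite scalerA.
Qed.

Lemma conv_sub S T x : conv' S x -> {subset S <= T} -> conv' T x.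
Proof. move=> h sub; apply: conv_trans h _ => p /sub; exact: conv_mem. Qed.

Lemma conv_seg T p q (u v : R) x : conv' T p -> conv' T q -> 0 <= u -> 0 <= v ->
  0 < u + v -> (u + v) *: x = u *: p + v *: q -> conv' T x.
Proof.
move=> [lam [l0 [l1 l2]]] [mu [m0 [m1 m2]]] hu hv huv hx.
have nz : u + v != 0 by rewrite gt_eqF.
exists (fun k => (u * lam k + v * mu k) / (u + v)); split.
  move=> k; apply: divr_ge0; last exact: ltW.
  by apply: addr_ge0; apply: mulr_ge0.
split.
- rewrite -mulr_suml big_split /= -!mulr_sumr l1 m1 !mulr1 divff //.
- have -> : x = (u + v)^-1 *: ((u + v) *: x) by rewrite scalerA mulVf // scale1r.
  rewrite hx l2 m2 !scaler_sumr -big_split scaler_sumr /=; apply: eq_bigr => k _.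
  by rewrite !scalerA -scalerDl scalerA mulrC.
Qed.

Lemma conv_map S x (f : 'rV[R]_n -> 'rV[R]_n) :
  (forall (F : nat -> 'rV[R]_n) (c : nat -> R) N, f (\sum_(k < N) c k *: F k) = \sum_(k < N) c k *: f (F k)) ->
  conv' S x -> conv' (map f S) (f x).
Proof.
move=> hf [lam [l0 [l1 l2]]]; exists lam; split => //; rewrite size_map; split => //.
rewrite l2 hf; apply: eq_bigr => k _; by rewrite (nth_map 0).
Qed.

End Conv.

End PP1.
Import PP1.

Module PP2.

Lemma tpermE' (T : finType) (a b x : T) :
  tperm a b x = if x == a then b else if x == b then a else x.
Proof.
case: tpermP => [->|->|/eqP/negbTE-> /eqP/negbTE->]; rewrite ?eqxx //.
by case: eqP => [->|].
Qed.

Section Bruhat.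
Variable n : nat.
Local Notation ble := (@bruhat_le n).
Implicit Types (u v x y g b : 'S_n).

Lemma ble_refl u : ble u u. Proof. exact: connect0. Qed.
Lemma ble_trans u v x : ble u v -> ble v x -> ble u x.
Proof. exact: connect_trans. Qed.
Lemma ble_step u (p q : 'I_n) : (p < q)%N -> (u p < u q)%N -> ble u (tperm p q * u)%g.
Proof.
move=> hpq hu; apply: connect1; apply/existsP; exists p; apply/existsP; exists q.
by rewrite hpq hu eqxx.
Qed.

Lemma connect_pres (Q : 'S_n -> Prop) :
  (forall x y, bruhat_step x y -> Q x -> Q y) -> forall x y, ble x y -> Q x -> Q y.
Proof.
move=> H x y /connectP[p pth ->]; elim: p x pth => //= z p IH x /andP[e pth] Qx.
exact: IH pth (H _ _ e Qx).
Qed.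

Lemma stepE x y : bruhat_step x y ->
  exists p q : 'I_n, [/\ (p < q)%N, (x p < x q)%N & y = (tperm p q * x)%g].
Proof.
move=> /existsP[p /existsP[q /and3P[h1 h2 /eqP h3]]]; by exists p, q.
Qed.

Lemma w0E (j : 'I_n) : val (w0 n j) = (n - j.+1)%N.
Proof. by rewrite /w0 permE. Qed.

Lemma w0_top b : ble (w0 n) b -> b = w0 n.
Proof.
move=> /connectP[[|y p] /= pth ->] //.
move: pth => /andP[/stepE[p' [q' [h1 h2 _]]] _].
move: h2; rewrite !w0E. have := ltn_ord q'. lia.
Qed.

Definition ninv g : nat :=
  #|[set pq : 'I_n * 'I_n | (pq.1 < pq.2)%N && (g pq.1 < g pq.2)%N]|.

Lemma ninv_le g : (ninv g <= n ^ 2)%N.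
Proof.
rewrite /ninv; apply: leq_trans (max_card _) _.
by rewrite card_prod card_ord.
Qed.

Lemma noasc_w0 g :
  (forall i : 'I_n, (i.+1 < n)%N -> (g (osucc i) < g i)%N) -> g = w0 n.
Proof.
move=> H; apply/permP => j; apply: val_inj; rewrite w0E.
pose f k := nat_of_ord (g (insubd j k)).
have vk k : (k < n)%N -> val (insubd j k : 'I_n) = k by move=> hk; rewrite val_insubd hk.
have Hf : forall k, (k.+1 < n)%N -> (f k.+1 < f k)%N.
  move=> k hk; rewrite /f.
  have -> : (insubd j k.+1 : 'I_n) = osucc (insubd j k).
    apply: val_inj; rewrite /osucc !val_insubd hk.
    have -> : (k < n)%N by lia. by rewrite hk.
  apply: H; rewrite vk //; lia.
have C1 : forall k, (k < n)%N -> (f k + k <= f 0)%N.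
  elim=> [|k IH] hk; first by rewrite addn0.
  have := IH (ltnW hk); have := Hf k hk; lia.
have C2 : forall d, (d < n)%N -> (d <= f (n.-1 - d))%N.
  elim=> [|d IH] hd //.
  have := IH (ltnW hd); have := Hf (n.-1 - d.+1)%N.
  have -> : (n.-1 - d.+1).+1 = (n.-1 - d)%N by lia.
  move=> h1 h2; have := h1 ltac:(lia); lia.
have hj := ltn_ord j.
have e : nat_of_ord (g j) = f j.
  by rewrite /f; congr (nat_of_ord (g _)); apply: val_inj; rewrite vk.
have := C1 j hj; have := C2 (n.-1 - j)%N ltac:(lia).
have -> : (n.-1 - (n.-1 - j))%N = j by lia.
have := ltn_ord (g (insubd j 0)); rewrite /f in e *. move=> *. change (nat_of_ord (g j) = (n - j.+1)%N). lia.
Qed.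

Section Adj.
Variables (i : 'I_n) (hi : (i.+1 < n)%N).
Local Notation s := (sti i).
Local Notation i' := (osucc i).

Lemma vi' : nat_of_ord i' = i.+1.
Proof. by rewrite /osucc val_insubd hi. Qed.

Lemma s_i : s i = i'. Proof. exact: tpermL. Qed.
Lemma s_i' : s i' = i. Proof. exact: tpermR. Qed.
Lemma ss : (s * s = 1)%g. Proof. exact: tperm2. Qed.
Lemma sK x : (s * (s * x) = x)%g. Proof. by rewrite mulgA ss mul1g. Qed.
Lemma ii' : i != i'.
Proof. apply/eqP => /(congr1 (@nat_of_ord n)); rewrite vi'; lia. Qed.

Lemma s_order (p q : 'I_n) : (p < q)%N -> ~~ ((p == i) && (q == i')) -> (s p < s q)%N.
Proof.
move=> hpq; rewrite /sti !tpermE' -!val_eqE /=.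
have := vi'.
repeat (case: ifP => /eqP; move=> ?); rewrite /=; lia.
Qed.

Lemma ble_adj g : (g i < g i')%N -> ble g (s * g)%g.
Proof. move=> h; apply: ble_step => //; rewrite vi'; lia. Qed.

Lemma perm_neq g : g i != g i'.
Proof. by rewrite (inj_eq perm_inj) ii'. Qed.

Lemma noasc g : ~~ (g i < g i')%N -> (g i' < g i)%N.
Proof. have := perm_neq g; rewrite -val_eqE /=; lia. Qed.

Lemma t_eq_s (p q : 'I_n) : (p < q)%N -> tperm p q = s -> p = i /\ q = i'.
Proof.
move=> hpq E.
have Ep : s p = q by rewrite -E tpermL.
move: Ep; rewrite /sti tpermE'.
case: eqP => [-> ->|_]; first by [].
case: eqP => [ep e|_ e]; last by move: hpq; rewrite e ltnn.
move: hpq; rewrite ep -e vi'; lia.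
Qed.

Lemma conj_step g (p q : 'I_n) : (p < q)%N -> (g p < g q)%N -> tperm p q != s ->
  ble (s * g)%g (s * (tperm p q * g))%g.
Proof.
move=> hpq hg hne.
have -> : (s * (tperm p q * g) = (tperm p q ^ s) * (s * g))%g.
  by rewrite /conjg /sti tpermV !mulgA -[(_ * tperm i i' * tperm i i')%g]mulgA tperm2 mulg1.
rewrite tpermJ; apply: ble_step; rewrite ?permM ?tpermK //.
apply: s_order => //; apply/andP => -[/eqP ep /eqP eq]; move: hne.
by rewrite ep eq eqxx.
Qed.

Lemma L1 g b : (g i < g i')%N -> ble (s * g)%g b -> ble g (s * b)%g.
Proof.
move=> hg hb.
suff : ble g b && ble g (s * b)%g by case/andP.
apply: (connect_pres (Q := fun x => ble g x && ble g (s * x)%g)) hb _.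
  move=> x y /stepE[p [q [hpq hx ->]]] /andP[h1 h2]; apply/andP; split.
    exact: ble_trans h1 (ble_step hpq hx).
  case: (eqVneq (tperm p q) s) => [->|hne]; first by rewrite sK.
  exact: ble_trans h2 (conj_step hpq hx hne).
by rewrite sK ble_adj // ble_refl.
Qed.

Definition Mx g := if (g i' < g i)%N then g else (s * g)%g.

Lemma L23 g b : (g i < g i')%N -> ble g b -> ble (s * g)%g (Mx b).
Proof.
move=> hg hb.
apply: (connect_pres (Q := fun x => ble (s * g)%g (Mx x))) hb _; last first.
  by rewrite /Mx ltnNge (ltnW hg) /= ble_refl.
move=> x y /stepE[p [q [hpq hx ->]]] h; apply: ble_trans h _.
case: (eqVneq (tperm p q) s) => [E|hne].
  have [ep eq] := t_eq_s hpq E; subst p q.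
  rewrite E /Mx !permM s_i s_i' hx ltnNge (ltnW hx) /= ble_refl //.
have ascE (z : 'S_n) : (z i < z i')%N = ~~ (z i' < z i)%N.
  have := perm_neq z; rewrite -val_eqE /=; lia.
have adj2 (z : 'S_n) : (z i' < z i)%N -> ble (s * z)%g z.
  move=> hz; have := @ble_adj (s * z)%g; rewrite sK; apply.
  by rewrite !permM s_i s_i'.
rewrite /Mx; case: ifP => hx'; case: ifP => hy.
- exact: ble_step.
- apply: ble_trans (ble_step hpq hx) (ble_adj _); by rewrite ascE hy.
- exact: ble_trans (conj_step hpq hx hne) (adj2 _ hy).
- exact: conj_step.
Qed.


Lemma ninv_dec g : (g i < g i')%N -> (ninv (s * g)%g < ninv g)%N.
Proof.
move=> hg; rewrite /ninv.
pose f (pq : 'I_n * 'I_n) := (s pq.1, s pq.2).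
have finj : injective f.
  by move=> [a b] [c d] /= [/perm_inj -> /perm_inj ->].
rewrite -(card_imset _ finj); apply: proper_card; apply/properP; split.
  apply/subsetP => z /imsetP[[p q] /=]; rewrite inE /= !permM => /andP[hpq hv] ->.
  rewrite inE /= hv andbT; apply: s_order => //.
  apply/andP => -[/eqP ep /eqP eq]; move: hv hg; rewrite ep eq s_i s_i'; lia.
exists (i, i'); first by rewrite inE /= hg vi' ltnSn.
apply/imsetP => -[[p q]] /=; rewrite inE /= => /andP[hpq _] [ep eq].
have : p = i' by rewrite -[p](tpermK i i') -ep /sti tpermL.
have : q = i by rewrite -[q](tpermK i i') -eq /sti tpermR.
move=> e1 e2; move: hpq; rewrite e1 e2 vi'; lia.
Qed.

Lemma ninv0 g : ninv g = 0%N -> ~~ (g i < g i')%N.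
Proof.
move=> /eqP; rewrite cards_eq0 => /eqP E; apply/negP => h.
have : (i, i') \in [set pq : 'I_n * 'I_n | (pq.1 < pq.2)%N && (g pq.1 < g pq.2)%N].
  by rewrite inE /= h vi' ltnSn.
by rewrite E inE.
Qed.
End Adj.

Lemma ble_w0 g : ble g (w0 n).
Proof.
move: {2}(ninv g) (leqnn (ninv g)) => k; elim: k g => [|k IH] g hk.
  rewrite (noasc_w0 (g := g)) ?ble_refl // => i hi.
  apply: noasc => //; apply: ninv0 => //; lia.
case: (pickP (fun i : 'I_n => (i.+1 < n)%N && (g i < g (osucc i))%N)) => [i /andP[hi hg]|none].
  apply: ble_trans (ble_adj hi hg) (IH _ _).
  have := ninv_dec hi hg; lia.
rewrite (noasc_w0 (g := g)) ?ble_refl // => i hi.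
apply: noasc => //; move: (none i); rewrite hi /=; by move=> ->.
Qed.
End Bruhat.

End PP2.
Import PP2.

Module PP3.
Local Open Scope ring_scope.

Section Poly.
Variables (R : realFieldType) (n : nat) (i : 'I_n) (hi : (i.+1 < n)%N).
Local Notation s := (sti i).
Local Notation i' := (osucc i).
Implicit Types (m mu : 'X_{1..n}) (f : {mpoly R[n]}).

Definition upd m (c e : nat) : 'X_{1..n} :=
  [multinom (if j == i then c else if j == i' then e else m j) | j < n].

Lemma updE m c e j : upd m c e j = if j == i then c else if j == i' then e else m j.
Proof. by rewrite /upd mnmE. Qed.

Lemma i'i : (i' == i) = false.
Proof. by rewrite eq_sym; apply/negbTE/ii'. Qed.

Lemma upd_id m : upd m (m i) (m i') = m.
Proof. apply/mnmP => j; rewrite updE; case: eqP => [->|_] //; by case: eqP => [->|]. Qed.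

Lemma upd_i m c e : upd m c e i = c. Proof. by rewrite updE eqxx. Qed.
Lemma upd_i' m c e : upd m c e i' = e. Proof. by rewrite updE i'i eqxx. Qed.

Lemma Xupd_i m c e : 'X_i * 'X_[upd m c e] = 'X_[upd m c.+1 e] :> {mpoly R[n]}.
Proof.
rewrite -mpolyXD; congr 'X_[_]; apply/mnmP => j; rewrite mnmDE mnm1E !updE.
have [E|hj] := eqVneq j i; first by rewrite ?E ??eqxx.
by rewrite ?(eq_sym i) ?(negbTE hj) ?add0n.
Qed.

Lemma Xupd_i' m c e : 'X_i' * 'X_[upd m c e] = 'X_[upd m c e.+1] :> {mpoly R[n]}.
Proof.
rewrite -mpolyXD; congr 'X_[_]; apply/mnmP => j; rewrite mnmDE mnm1E !updE.
have [E|hj] := eqVneq j i; first by rewrite ?E ?i'i.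
have [E|hj'] := eqVneq j i'; first by rewrite ?E ?eqxx.
by rewrite ?(eq_sym i') ?(negbTE hj') ?add0n.
Qed.

Lemma msym_upd m c e : msym s 'X_[upd m c e] = 'X_[upd m e c] :> {mpoly R[n]}.
Proof.
rewrite msymX /sti tpermV; congr 'X_[_]; apply/mnmP => j; rewrite mnmE !updE.
rewrite tpermE'.
have [E|hj] := eqVneq j i; first by rewrite i'i eqxx.
have [E|hj'] := eqVneq j i'; first by rewrite eqxx.
by rewrite (negbTE hj) (negbTE hj').
Qed.

Definition G m : {mpoly R[n]} :=
  if (m i' <= m i)%N then \sum_(k < (m i - m i').+1) 'X_[upd m (m i - k) (m i' + k)]
  else - \sum_(k < (m i' - m i).-1) 'X_[upd m (m i + k).+1 (m i' - k).-1].

Lemma G_spec m : ('X_i - 'X_i') * G m = 'X_i * 'X_[m] - msym s ('X_i * 'X_[m]).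
Proof.
have E : 'X_i * 'X_[m] = 'X_[upd m (m i).+1 (m i')] :> {mpoly R[n]} by rewrite -Xupd_i upd_id.
rewrite E msym_upd.
set a := m i; set b := m i'.
rewrite /G -/a -/b; case: ifP => hba.
- pose F k := 'X_[upd m (a.+1 - k) (b + k)] : {mpoly R[n]}.
  rewrite mulr_sumr (eq_bigr (fun k : 'I_(a - b).+1 => F k - F k.+1)); last first.
    move=> k _; rewrite mulrBl Xupd_i Xupd_i' /F; have := ltn_ord k => hk.
    have -> : ((a - k).+1 = a.+1 - k)%N by lia.
    have -> : ((a - k) = a.+1 - k.+1)%N by lia.
    by rewrite addnS.
  rewrite -(big_mkord xpredT (fun k => F k - F k.+1)).
  rewrite (eq_bigr (fun k => - (F k.+1 - F k))); last by move=> k _; rewrite opprB.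
  rewrite sumrN telescope_sumr // opprB /F subn0 addn0.
  congr (_ - 'X_[upd m _ _]); lia.
- move/negbT: hba; rewrite -ltnNge => hba.
  pose H k := 'X_[upd m (a + k).+1 (b - k)] : {mpoly R[n]}.
  rewrite mulrN mulr_sumr (eq_bigr (fun k : 'I_(b - a).-1 => H k.+1 - H k)); last first.
    move=> k _; rewrite mulrBl Xupd_i Xupd_i' /H; have := ltn_ord k => hk.
    have -> : ((b - k).-1.+1 = b - k)%N by lia.
    have -> : ((b - k).-1 = b - k.+1)%N by lia.
    by rewrite addnS.
  rewrite -(big_mkord xpredT (fun k => H k.+1 - H k)).
  rewrite telescope_sumr // opprB /H addn0 subn0.
  congr (_ - _); congr ('X_[upd m _ _]); lia.
Qed.

Lemma mcoeff_sumE (I : Type) (r : seq I) (P : pred I) (F : I -> {mpoly R[n]}) mu :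
  (\sum_(k <- r | P k) F k)@_mu = \sum_(k <- r | P k) (F k)@_mu.
Proof. exact: (big_morph (mcoeff mu) (@mcoeffD n R mu) (@mcoeff0 n R mu)). Qed.

Lemma Xdiff_neq0 : ('X_i - 'X_i' : {mpoly R[n]}) != 0.
Proof.
apply/eqP => /(congr1 (mcoeff U_(i))); rewrite mcoeffB !mcoeffXU eqxx i'i mcoeff0 subr0.
by move/eqP; rewrite oner_eq0.
Qed.

Lemma ddiff_eq (h g : {mpoly R[n]}) : ('X_i - 'X_i') * g = h - msym s h -> ddiff i h = g.
Proof.
move=> H; rewrite /ddiff.
set P := fun g0 : {mpoly R[n]} => _.
have := @epsilon_spec _ (inhabits 0) P (ex_intro _ g H).
rewrite /P -H; apply: mulfI; exact: Xdiff_neq0.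
Qed.

Lemma lin_aux (r : seq 'X_{1..n}) (c : 'X_{1..n} -> R) :
  \sum_(m <- r) c m *: ('X_i * 'X_[m] - msym s ('X_i * 'X_[m])) =
  'X_i * (\sum_(m <- r) c m *: 'X_[m]) - msym s ('X_i * \sum_(m <- r) c m *: 'X_[m]).
Proof.
rewrite mulr_sumr (big_morph (msym s) (@msymD n R s) (@msym0 n R s)) -sumrB; apply: eq_bigr => m _.
by rewrite scalerBr -scalerAr msymZ.
Qed.

Lemma demazureE f : demazure i f = \sum_(m <- msupp f) f@_m *: G m.
Proof.
apply: ddiff_eq; rewrite mulr_sumr.
rewrite (eq_bigr (fun m => f@_m *: ('X_i * 'X_[m] - msym s ('X_i * 'X_[m])))); last first.
  by move=> m _; rewrite -scalerAr G_spec.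
by rewrite lin_aux -mpolyE.
Qed.

Lemma demazure_coef f mu : (demazure i f)@_mu = \sum_(m <- msupp f) f@_m * (G m)@_mu.
Proof.
rewrite demazureE mcoeff_sumE; apply: eq_bigr => m _; by rewrite mcoeffZ.
Qed.

Definition seg (a b c : nat) := if (b <= a)%N then (b <= c <= a)%N else (a < c < b)%N.

Lemma G_nz m mu : (G m)@_mu != 0 ->
  exists c, seg (m i) (m i') c /\ mu = upd m c (m i + m i' - c).
Proof.
rewrite /G /seg; case: ifP => hba.
- rewrite mcoeff_sumE.
  case: (pickP (fun k : 'I_(m i - m i').+1 => upd m (m i - k) (m i' + k) == mu)) => [k /eqP E|none].
    move=> _; exists (m i - k)%N; have := ltn_ord k => hk; split; first by lia.
    rewrite -E; congr upd; lia.
  rewrite big1 ?eqxx // => k _; by rewrite mcoeffX none.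
- rewrite mcoeffN oppr_eq0 mcoeff_sumE; move/negbT: hba; rewrite -ltnNge => hba.
  case: (pickP (fun k : 'I_(m i' - m i).-1 => upd m (m i + k).+1 (m i' - k).-1 == mu)) => [k /eqP E|none].
    move=> _; exists (m i + k).+1; have := ltn_ord k => hk; split; first by lia.
    rewrite -E; congr upd; lia.
  rewrite big1 ?eqxx // => k _; by rewrite mcoeffX none.
Qed.

Lemma upd_neq m c e : c != m i -> upd m c e != m.
Proof. by apply: contra => /eqP E; rewrite -{1}E upd_i. Qed.

Lemma G_desc_self m : (m i' < m i)%N -> (G m)@_m = 1.
Proof.
move=> h; rewrite /G ifT ?(ltnW h) // mcoeff_sumE.
rewrite (@sum_single _ _ 0 (fun k => ('X_[upd m (m i - k) (m i' + k)] : {mpoly R[n]})@_m)).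
  by rewrite ltn0Sn /= subn0 addn0 upd_id mcoeffX eqxx.
move=> k hk k0; rewrite mcoeffX; apply/eqP; rewrite pnatr_eq0 eqb0.
apply: upd_neq; apply/eqP; lia.
Qed.

Lemma G_asc_self m : (m i < m i')%N -> (G m)@_m = 0.
Proof.
move=> h; rewrite /G ifN -?ltnNge // mcoeffN mcoeff_sumE big1 ?oppr0 // => k _.
rewrite mcoeffX; apply/eqP; rewrite pnatr_eq0 eqb0; apply: upd_neq; apply/eqP; lia.
Qed.

Lemma G_desc_swap m : (m i' < m i)%N -> (G m)@_(upd m (m i') (m i)) = 1.
Proof.
move=> h; rewrite /G ifT ?(ltnW h) // mcoeff_sumE.
rewrite (@sum_single _ _ (m i - m i')%N (fun k => ('X_[upd m (m i - k) (m i' + k)] : {mpoly R[n]})@_(upd m (m i') (m i)))).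
  rewrite ltnSn mcoeffX; have -> : (m i - (m i - m i') = m i')%N by lia.
  have -> : (m i' + (m i - m i') = m i)%N by lia.
  by rewrite eqxx.
move=> k hk k0; rewrite mcoeffX; apply/eqP; rewrite pnatr_eq0 eqb0.
apply/eqP => /(congr1 (fun z : 'X_{1..n} => z i)); rewrite !upd_i; lia.
Qed.

Lemma G_asc_swap m : (m i < m i')%N -> (G m)@_(upd m (m i') (m i)) = 0.
Proof.
move=> h; rewrite /G ifN -?ltnNge // mcoeffN mcoeff_sumE big1 ?oppr0 // => k _.
rewrite mcoeffX; apply/eqP; rewrite pnatr_eq0 eqb0.
apply/eqP => /(congr1 (fun z : 'X_{1..n} => z i)); rewrite !upd_i.
have := ltn_ord k; lia.
Qed.

Definition sq m : nat := (\sum_(j < n) (m j) ^ 2)%N.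

Definition rest m : nat := (\sum_(j < n | (j != i) && (j != i')) m j ^ 2)%N.

Lemma sq_split m : sq m = (m i ^ 2 + m i' ^ 2 + rest m)%N.
Proof.
rewrite /sq /rest (bigD1 i) //= (bigD1 i') /= ?i'i // addnA.
congr (_ + _); apply: eq_bigl => j; by [].
Qed.

Lemma sq_upd m c e : (sq (upd m c e) + (m i ^ 2 + m i' ^ 2) = sq m + (c ^ 2 + e ^ 2))%N.
Proof.
rewrite !sq_split upd_i upd_i'.
have -> : rest (upd m c e) = rest m.
  apply: eq_bigr => j /andP[h1 h2]; by rewrite updE (negbTE h1) (negbTE h2).
lia.
Qed.

Lemma seg_sq a b c : seg a b c -> (c ^ 2 + (a + b - c) ^ 2 <= a ^ 2 + b ^ 2)%N.
Proof. rewrite /seg; case: ifP => h1 h2; nia. Qed.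

Lemma seg_vertex a b c : seg a b c -> (a ^ 2 + b ^ 2 <= c ^ 2 + (a + b - c) ^ 2)%N ->
  (b <= a)%N /\ (c = a \/ c = b).
Proof. rewrite /seg; case: ifP => h1 h2 h3; nia. Qed.

End Poly.

End PP3.
Import PP3.

Local Open Scope ring_scope.

Section Main.
Variables (R : realFieldType) (n : nat).
Local Notation ble := (@bruhat_le n).

Definition hat (g : 'S_n) : 'X_{1..n} := [multinom (g j).+1 | j < n].
Definition ptsU (g : 'S_n) : seq 'rV[R]_n := [seq pvec R b | b <- enum 'S_n & ble g b].

Lemma hatE g j : hat g j = (g j).+1. Proof. by rewrite /hat mnmE. Qed.

Lemma mvec_hat g : mvec R (hat g) = pvec R g.
Proof. by apply/rowP => j; rewrite !mxE hatE. Qed.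

Lemma hat_inj : injective hat.
Proof.
move=> g h /mnmP E; apply/permP => j; apply: val_inj; have := E j; rewrite !hatE.
by case.
Qed.

Lemma sq_hat g : sq (hat g) = sq (hat (w0 n)).
Proof.
suff E : forall h, sq (hat h) = (\sum_(j < n) (j.+1) ^ 2)%N by rewrite !E.
move=> h; rewrite /sq (reindex_inj (@perm_inj _ h^-1)) /=.
by apply: eq_bigr => j _; rewrite hatE permKV.
Qed.

Lemma in_ptsU g b : ble g b -> pvec R b \in ptsU g.
Proof. by move=> h; apply: map_f; rewrite mem_filter h mem_enum. Qed.

Lemma ptsUP g p : p \in ptsU g -> exists2 b, ble g b & p = pvec R b.
Proof. by move=> /mapP[b]; rewrite mem_filter => /andP[h _] ->; exists b. Qed.

Definition Inv (g : 'S_n) (f : {mpoly R[n]}) :=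
  [/\ (forall mu, mu \in msupp f -> conv' (ptsU g) (mvec R mu)),
      (forall b, f@_(hat b) = (ble g b)%:R) &
      (forall mu, mu \in msupp f -> (sq mu <= sq (hat (w0 n)))%N)].

Lemma Inv_base : Inv (w0 n) 'X_[hat (w0 n)].
Proof.
split.
- move=> mu; rewrite msuppX inE => /eqP ->; rewrite mvec_hat.
  apply: conv_mem; apply: in_ptsU; exact: ble_refl.
- move=> b; rewrite mcoeffX; case hb: (ble (w0 n) b).
    by rewrite (w0_top hb) eqxx.
  case: eqP => // /hat_inj E; move: hb; by rewrite -E ble_refl.
- by move=> mu; rewrite msuppX inE => /eqP ->.
Qed.

Section Step.
Variables (i : 'I_n) (hi : (i.+1 < n)%N).
Local Notation s := (sti i).
Local Notation i' := (osucc i).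

Lemma hat_s g : hat (s * g)%g = upd i (hat g) (hat g i') (hat g i).
Proof.
apply/mnmP => j; rewrite updE !hatE permM /sti tpermE'.
by case: (j == i); case: (j == i').
Qed.

Lemma supp_step (f : {mpoly R[n]}) mu : mu \in msupp (demazure i f) ->
  exists2 m, m \in msupp f & exists c, seg (m i) (m i') c /\ mu = upd i m c (m i + m i' - c).
Proof.
rewrite mcoeff_msupp (demazure_coef hi) => H.
case: (boolP (has (fun m => (G R i m)@_mu != 0) (msupp f))) => [/hasP[m hm hG]|/hasPn hn].
  by exists m; [done | exact: (G_nz hi hG)].
move: H; rewrite big_seq big1 ?eqxx // => m hm.
by move: (hn m hm); rewrite negbK => /eqP ->; rewrite mulr0.
Qed.

Lemma sum_coef (f : {mpoly R[n]}) x : \sum_(m <- msupp f) f@_m * (m == x)%:R = f@_x.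
Proof.
rewrite {3}(mpolyE f) mcoeff_sumE; apply: eq_bigr => m _; by rewrite mcoeffZ mcoeffX.
Qed.

Definition swapv (v : 'rV[R]_n) : 'rV[R]_n := \row_j v 0 (s j).

Lemma swapv_lin (F : nat -> 'rV[R]_n) (c : nat -> R) N :
  swapv (\sum_(k < N) c k *: F k) = \sum_(k < N) c k *: swapv (F k).
Proof.
apply/rowP => j; rewrite !mxE !summxE; apply: eq_bigr => k _; by rewrite !mxE.
Qed.

Lemma swapv_mvec m : swapv (mvec R m) = mvec R (upd i m (m i') (m i)).
Proof.
apply/rowP => j; rewrite !mxE updE /sti tpermE'.
by case: (j == i); case: (j == i').
Qed.

Lemma swapv_pvec b : swapv (pvec R b) = pvec R (s * b)%g.
Proof. by apply/rowP => j; rewrite !mxE permM. Qed.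

Lemma row_comb (U V : nat) (x p q : 'X_{1..n}) :
  (forall j, (U + V) * x j = U * p j + V * q j)%N ->
  (U%:R + V%:R) *: mvec R x = U%:R *: mvec R p + V%:R *: mvec R q.
Proof.
move=> H; apply/rowP => j; rewrite !mxE -!natrM -natrD -natrD -natrM H //.
Qed.

Lemma upd_upd (x : 'X_{1..n}) c e c' e' : upd i (upd i x c e) c' e' = upd i x c' e'.
Proof.
apply/mnmP => j; rewrite !updE; by case: (j == i); case: (j == i').
Qed.

Lemma hat_bs (b : 'S_n) : hat (s * b)%g != hat b.
Proof.
apply/negP => /eqP /hat_inj /permP /(_ i); rewrite permM s_i.
by move/eqP; rewrite eq_sym (negbTE (perm_neq hi b)).
Qed.

Lemma Inv_step (g : 'S_n) f : (g i < g i')%N -> Inv (s * g)%g f -> Inv g (demazure i f).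
Proof.
move=> hg [I1 I2 I3]; split.
- move=> mu /supp_step[m hm [c [hseg ->]]].
  have P1 : conv' (ptsU g) (mvec R m).
    apply: conv_sub (I1 _ hm) _ => p /ptsUP[b hb ->]; apply: in_ptsU.
    exact: ble_trans (ble_adj hi hg) hb.
  have P2 : conv' (ptsU g) (mvec R (upd i m (m i') (m i))).
    rewrite -swapv_mvec; have := conv_map swapv_lin (I1 _ hm).
    move=> h; apply: conv_sub h _ => p /mapP[p' /ptsUP[b hb ->] ->].
    rewrite swapv_pvec; apply: in_ptsU; exact: (L1 hi hg hb).
  move: hseg; rewrite /seg; case: ifP => hba hc.
  + have [eab|nab] := eqVneq (m i) (m i').
      have -> : upd i m c (m i + m i' - c) = m.
        rewrite -{4}(upd_id i m); congr upd; lia.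
      exact: P1.
    apply: (conv_seg P1 P2 (u := ((c - m i')%N)%:R) (v := ((m i - c)%N)%:R)).
    * exact: ler0n.
    * exact: ler0n.
    * rewrite -natrD ltr0n; lia.
    * apply: row_comb => j.
      have [->|nj] := eqVneq j i; first by rewrite !upd_i; nia.
      have [->|nj'] := eqVneq j i'; first by rewrite !(upd_i' hi); nia.
      rewrite !updE (negbTE nj) (negbTE nj'); nia.
  + apply: (conv_seg P1 P2 (u := ((m i' - c)%N)%:R) (v := ((c - m i)%N)%:R)).
    * exact: ler0n.
    * exact: ler0n.
    * rewrite -natrD ltr0n; lia.
    * apply: row_comb => j.
      have [->|nj] := eqVneq j i; first by rewrite !upd_i; nia.
      have [->|nj'] := eqVneq j i'; first by rewrite !(upd_i' hi); nia.
      rewrite !updE (negbTE nj) (negbTE nj'); nia.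
- move=> b; rewrite (demazure_coef hi).
  pose D := (b i' < b i)%N.
  have hbi : hat b i = (b i).+1 by rewrite hatE.
  have hbi' : hat b i' = (b i').+1 by rewrite hatE.
  have key : forall m, m \in msupp f -> (G R i m)@_(hat b) =
      (m == hat b)%:R * D%:R + (m == hat (s * b)%g)%:R * (~~ D)%:R.
    move=> m hm.
    have [E|nE] := eqVneq m (hat b).
      subst m; rewrite eq_sym (negbTE (hat_bs b)) mul0r addr0 mul1r /D.
      case hD: (b i' < b i)%N.
        by rewrite (G_desc_self R hi) // hbi hbi'.
      rewrite (G_asc_self R hi) // hbi hbi' ltnS; move/negbT: hD; have := perm_neq hi b; rewrite -val_eqE /=; lia.
    have [E'|nE'] := eqVneq m (hat (s * b)%g).
      have Eb : hat b = upd i m (m i') (m i).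
        rewrite E' hat_s upd_upd upd_i (upd_i' hi) upd_id //.
      rewrite mul0r add0r mul1r Eb /D.
      have mi : m i = (b i').+1 by rewrite E' hat_s upd_i hatE.
      have mi' : m i' = (b i).+1 by rewrite E' hat_s (upd_i' hi) hatE.
      case hD: (b i' < b i)%N; rewrite /=.
        rewrite (G_asc_swap R hi) // mi mi' ltnS //.
      rewrite (G_desc_swap R hi) // mi mi' ltnS; move/negbT: hD; have := perm_neq hi b; rewrite -val_eqE /=; lia.
    rewrite mul0r add0r mul0r; apply/eqP; apply: contraT => hnz.
    have [c [hseg Eb]] := G_nz hi hnz.
    have := sq_upd hi m c (m i + m i' - c); rewrite -Eb.
    have := I3 _ hm; rewrite -(sq_hat b) => h1 h2.
    have h3 : (m i ^ 2 + m i' ^ 2 <= c ^ 2 + (m i + m i' - c) ^ 2)%N by lia.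
    have [_ [ec|ec]] := seg_vertex hi hseg h3.
      move: nE; rewrite Eb ec; have -> : (m i + m i' - m i = m i')%N by lia.
      by rewrite upd_id eqxx.
    move: nE'; rewrite hat_s Eb ec; have -> : (m i + m i' - m i' = m i)%N by lia.
    by rewrite (upd_i' hi) upd_i upd_upd upd_id eqxx.
  rewrite big_seq (eq_bigr (fun m => f@_m * ((m == hat b)%:R * D%:R + (m == hat (s * b)%g)%:R * (~~ D)%:R))); last first.
    by move=> m hm; rewrite key.
  rewrite -big_seq.
  rewrite (eq_bigr (fun m => f@_m * (m == hat b)%:R * D%:R + f@_m * (m == hat (s * b)%g)%:R * (~~ D)%:R)); last first.
    by move=> m _; rewrite mulrDr !mulrA.
  rewrite big_split /= -!mulr_suml !sum_coef !I2 /D.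
  case hD: (b i' < b i)%N; rewrite /=; rewrite ?mulr1 ?mulr0 ?add0r ?addr0.
    have -> // : ble (s * g)%g b = ble g b; apply/idP/idP => h.
      exact: ble_trans (ble_adj hi hg) h.
    by have := L23 hi hg h; rewrite /Mx hD.
  have -> // : ble (s * g)%g (s * b)%g = ble g b; apply/idP/idP => h.
    by have := L1 hi hg h; rewrite sK.
  by have := L23 hi hg h; rewrite /Mx hD.
- move=> mu /supp_step[m hm [c [hseg ->]]].
  have := sq_upd hi m c (m i + m i' - c); have := seg_sq hi hseg; have := I3 _ hm; lia.
Qed.
End Step.

Lemma main k : forall g : 'S_n, (ninv g <= k)%N -> Inv g (@key_fuel R n k (perm_comp g)).
Proof.
elim: k => [|k IH] g hk /=.
  have -> : g = w0 n.
    apply: noasc_w0 => i hi; apply: (noasc hi); apply: (ninv0 hi); lia.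
  exact: Inv_base.
case: pickP => [i /andP[hi ha] | none].
  have -> : (fun p => perm_comp g (sti i p)) = perm_comp (sti i * g)%g.
    by apply: functional_extensionality => p; rewrite /perm_comp permM.
  rewrite /perm_comp ltnS in ha.
  apply: (Inv_step hi ha); apply: IH; have := ninv_dec hi ha; lia.
have -> : g = w0 n.
  apply: noasc_w0 => i hi; apply: (noasc hi); move: (none i).
  by rewrite hi /= /perm_comp ltnS => ->.
exact: Inv_base.
Qed.
End Main.

Theorem corollary1p3 (R : realFieldType) (n : nat) (w : 'S_n) :
  forall x : 'rV[R]_n,
    Newton (@key R n (perm_comp w)) x <-> @bip R n w (w0 n) x.
Proof.
move=> x.
have [I1 I2 _] := main R (ninv_le w).
have Ebip : [seq pvec R s | s <- enum 'S_n & bruhat_le w s && bruhat_le s (w0 n)] = ptsU R w.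
  rewrite /ptsU; congr map; apply: eq_filter => b; by rewrite ble_w0 andbT.
rewrite /Newton /bip Ebip !convE /key; split => h.
- apply: conv_trans h _ => p /mapP[mu hmu ->]; exact: I1.
- apply: conv_trans h _ => p /ptsUP[b hb ->]; apply: conv_mem; rewrite -mvec_hat.
  by apply: map_f; rewrite mcoeff_msupp I2 hb oner_neq0.
Qed.
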